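(* Let $x\in\mathbb{R}^p$ have $\mathbb{E}[x]=0$, covariance $\Sigma$ and bounded fourth moments with constant $C_4$. Let $\Phi:\mathbb{R}\to\mathbb{R}$ be four times differentiable and $c(\sigma)>0$, and let $y$ be real-valued with, conditionally on $x$ and writing $\eta^*=\langle x,\theta^*\rangle$, $\mathbb{E}[y\mid x]=\Phi'(\eta^* )$ and $\mathbb{E}[(y-\Phi'(\eta^* ))^4\mid x]=c(\sigma)^3\Phi^{(4)}(\eta^* )+3c(\sigma)^2(\Phi''(\eta^* ))^2$ (as holds when $y\mid x$ has density proportional to $\exp((y\eta^*-\Phi(\eta^* ))/c(\sigma))$ with respect to a base measure). Assume there are constants $L_{\Phi,2k},B_{\Phi,2k}\ge0$ ($k=1,2$) with $\mathbb{E}_x|\Phi'(\langle x,\theta\rangle)-\Phi'(\langle x,\theta^*\rangle)|^{2k}\le L_{\Phi,2k}\|\theta-\theta^*\|_2^{2k}+B_{\Phi,2k}$ for all $\theta$, and constants $M_{\Phi,2,2},M_{\Phi,4,1}$ with $\mathbb{E}_x[|\Phi''(\eta^* )|^2]\le M_{\Phi,2,2}$, $\mathbb{E}_x[|\Phi^{(4)}(\eta^* )|]\le M_{\Phi,4,1}$. Let $\overline{\mathcal{L}}(\theta;(x,y))=-y\langle x,\theta\rangle+\Phi(\langle x,\theta\rangle)$ and $\Delta=\theta-\theta^*$. Then there are constants $C_1,C_2>0$ depending only on $C_4$ such that for all $\theta\in\mathbb{R}^p$, $$\|\operatorname{Cov}(\nabla_\theta\overline{\mathcal{L}}(\theta;(x,y)))\|_2\le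 C_1\|\Delta\|_2^2\|\Sigma\|_2\big(\sqrt{L_{\Phi,4}}+L_{\Phi,2}\big)+C_2\|\Sigma\|_2\Big(B_{\Phi,2}+\sqrt{B_{\Phi,4}}+c(\sigma)\sqrt{3M_{\Phi,2,2}}+\sqrt{c(\sigma)^3M_{\Phi,4,1}}\Big).$$
   Context: A random vector $x$ with mean $\mu$ has bounded $2k$-th moments with constant $C_{2k}$ if for every unit vector $v$, $\mathbb{E}[\langle x-\mu,v\rangle^{2k}]\le C_{2k}(\mathbb{E}[\langle x-\mu,v\rangle^2])^k$. Matrix norm $\|\cdot\|_2$ is the operator norm. *)

(* Defs.v *)
From HB Require Import structures.
From mathcomp Require Import all_boot all_order all_algebra.
From mathcomp Require Import all_classical all_reals all_analysis.
Set Implicit Arguments. Unset Strict Implicit. Unset Printing Implicit Defensive.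
Import Order.TTheory GRing.Theory Num.Theory.
Local Open Scope classical_set_scope.
Local Open Scope ring_scope.

Section Defs.
Context {R : realType}.

Definition dotv {p : nat} (u v : 'cV[R]_p) : R := \sum_(i < p) u i 0 * v i 0.
Definition l2norm {p : nat} (v : 'cV[R]_p) : R := Num.sqrt (dotv v v).

Definition opnorm {p : nat} (A : 'M[R]_p) : R :=
  sup [set l2norm (A *m v) | v in [set v : 'cV[R]_p | l2norm v = 1]].

Context {d : measure_display} {T : measurableType d} (P : probability T R).

Definition xvec {p : nat} (xs : 'I_p -> T -> R) (w : T) : 'cV[R]_p :=
  \col_i xs i w.

Definition meanvec {p : nat} (xs : 'I_p -> T -> R) : 'cV[R]_p :=
  \col_i fine ('E_P[xs i])%E.
Definition covmx {p : nat} (xs : 'I_p -> T -> R) : 'M[R]_p :=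
  \matrix_(i, j) fine (covariance P (xs i) (xs j)).

Definition bounded_moments {p : nat} (k : nat) (C : R) (xs : 'I_p -> T -> R) :=
  forall v : 'cV[R]_p, l2norm v = 1 ->
    ('E_P[(fun w => dotv (xvec xs w - meanvec xs) v ^+ (2 * k))%R]
      <= (C * (fine 'E_P[(fun w => dotv (xvec xs w - meanvec xs) v ^+ 2)%R]) ^+ k)%:E)%E.

Definition sigma_of {p : nat} (xs : 'I_p -> T -> R) : set (set T) :=
  <<s [set A | exists i (B : set R), measurable B /\ A = xs i @^-1` B] >>.

(* W is (a version of) the conditional expectation E[Z | x]:
   Z integrable and the integrals of Z and W agree on every sigma(x)-set *)
Definition cond_exp_is {p : nat} (xs : 'I_p -> T -> R) (Z W : T -> R) :=
  P.-integrable setT (EFin \o Z) /\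
  forall A, sigma_of xs A ->
    (\int[P]_(w in A) (Z w)%:E = \int[P]_(w in A) (W w)%:E)%E.

End Defs.

(* Main.v *)
Require Import Defs.
From HB Require Import structures.
From mathcomp Require Import all_boot all_order all_algebra.
From mathcomp Require Import all_classical all_reals all_analysis.
From mathcomp Require Import measurable_realfun.
From mathcomp Require Import ring lra.
Import Order.TTheory GRing.Theory Num.Theory.
Import numFieldNormedType.Exports.
Local Open Scope classical_set_scope.
Local Open Scope ring_scope.

Module Aux.
Set Implicit Arguments. Unset Strict Implicit. Unset Printing Implicit Defensive.
Section Alg.
Variable R : realType.

Lemma quad_lemma (e a b : R) : 0 <= a -> 0 <= b -> 0 <= e ->
  (forall t, 0 < t -> 2 * t * e <= t ^+ 2 * a + b) -> e ^+ 2 <= a * b.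
Proof.
move=> a0 b0 e0 H.
have [->|ep] := eqVneq e 0; first by rewrite expr0n /= mulr_ge0.
have eg : 0 < e by rewrite lt0r ep.
have [az|ap] := eqVneq a 0.
  have tp : 0 < (b + 1) / e by rewrite divr_gt0 // ltr_wpDl.
  have := H _ tp.
  have te : (b + 1) / e * e = b + 1 by rewrite -mulrA mulVf // mulr1.
  rewrite az; nra.
have ag : 0 < a by rewrite lt0r ap.
have tp : 0 < e / a by rewrite divr_gt0.
have := H _ tp.
have te : e / a * a = e by rewrite -mulrA mulVf // mulr1.
nra.
Qed.

Lemma cs_gen (xx xy yy : R) : 0 <= xx -> 0 <= yy ->
  (forall t s, 0 < t -> s ^+ 2 = 1 -> 0 <= t ^+ 2 * xx + 2 * t * s * xy + yy) ->
  xy ^+ 2 <= xx * yy.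
Proof.
move=> x0 y0 H.
have [h|h] := leP 0 xy.
  apply: quad_lemma => // t t0.
  have := H t (-1) t0 ltac:(by rewrite sqrrN expr1n); nra.
rewrite -sqrrN; apply: quad_lemma => //; first by rewrite oppr_ge0 ltW.
move=> t t0; have := H t 1 t0 ltac:(by rewrite expr1n); nra.
Qed.

Definition bform p (A : 'M[R]_p) (x y : 'cV[R]_p) : R :=
  \sum_i \sum_j x i 0 * A i j * y j 0.

Lemma bform_expand p (A : 'M[R]_p) x y t s :
  bform A (t *: x + s *: y) (t *: x + s *: y) =
  t ^+ 2 * bform A x x + t * s * (bform A x y + bform A y x) + s ^+ 2 * bform A y y.
Proof.
rewrite /bform mulrDr !mulr_sumr -!big_split /=; apply: eq_bigr => i _.
rewrite !mulr_sumr -!big_split /=; apply: eq_bigr => j _.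
rewrite !mxE; ring.
Qed.

Lemma bform_hom p (A : 'M[R]_p) x k :
  bform A (k *: x) (k *: x) = k ^+ 2 * bform A x x.
Proof.
rewrite /bform !mulr_sumr; apply: eq_bigr => i _.
rewrite !mulr_sumr; apply: eq_bigr => j _.
rewrite !mxE; ring.
Qed.

Lemma bform_sym p (A : 'M[R]_p) x y : (forall i j, A i j = A j i) ->
  bform A x y = bform A y x.
Proof.
move=> sA; rewrite /bform exchange_big /=; apply: eq_bigr => i _.
apply: eq_bigr => j _; rewrite sA; ring.
Qed.

Lemma bform_dotv p (A : 'M[R]_p) x y : bform A x y = dotv x (A *m y).
Proof.
rewrite /bform /dotv; apply: eq_bigr => i _.
rewrite mxE mulr_sumr; apply: eq_bigr => j _; ring.
Qed.

Lemma bform_cs p (A : 'M[R]_p) x y : (forall i j, A i j = A j i) ->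
  (forall z, 0 <= bform A z z) ->
  bform A x y ^+ 2 <= bform A x x * bform A y y.
Proof.
move=> sA ps; apply: cs_gen => // t s t0 s1.
have := ps (t *: x + s *: y); rewrite bform_expand (bform_sym _ y) // s1.
by rewrite mul1r; nra.
Qed.

Lemma dotv_ge0 p (x : 'cV[R]_p) : 0 <= dotv x x.
Proof. by apply: sumr_ge0 => i _; rewrite -expr2 sqr_ge0. Qed.

Lemma dotv_expand p (x y : 'cV[R]_p) t s :
  dotv (t *: x + s *: y) (t *: x + s *: y) =
  t ^+ 2 * dotv x x + 2 * t * s * dotv x y + s ^+ 2 * dotv y y.
Proof.
rewrite /dotv !mulr_sumr -!big_split /=; apply: eq_bigr => i _.
rewrite !mxE; ring.
Qed.

Lemma dotv_cs p (x y : 'cV[R]_p) : dotv x y ^+ 2 <= dotv x x * dotv y y.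
Proof.
apply: cs_gen; try exact: dotv_ge0.
by move=> t s t0 s1; have := dotv_ge0 (t *: x + s *: y); rewrite dotv_expand s1 mul1r.
Qed.

Lemma dotv_eq0 p (z : 'cV[R]_p) : dotv z z = 0 -> forall i, z i 0 = 0.
Proof.
move=> h i; have /psumr_eq0P := h.
have H : forall j : 'I_p, true -> 0 <= z j 0 * z j 0 by move=> j _; rewrite -expr2 sqr_ge0.
move=> /(_ H i isT) /eqP; rewrite mulf_eq0 orbb => /eqP //.
Qed.

Lemma l2norm1 p (v : 'cV[R]_p) : l2norm v = 1 -> dotv v v = 1.
Proof.
move=> h; rewrite -(sqr_sqrtr (dotv_ge0 v)); by rewrite -/(l2norm v) h expr1n.
Qed.

Lemma l2norm_ge0 p (v : 'cV[R]_p) : 0 <= l2norm v.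
Proof. exact: sqrtr_ge0. Qed.

Lemma sqr_l2norm p (v : 'cV[R]_p) : l2norm v ^+ 2 = dotv v v.
Proof. exact: sqr_sqrtr (dotv_ge0 v). Qed.

End Alg.

Section Alg2.
Variable R : realType.

Lemma unit_entry_le1 p (v : 'cV[R]_p) j : l2norm v = 1 -> `|v j 0| <= 1.
Proof.
move=> /l2norm1 h.
have : v j 0 * v j 0 <= 1.
  rewrite -h /dotv (bigD1 j) //= lerDl; apply: sumr_ge0 => i _.
  by rewrite -expr2 sqr_ge0.
rewrite -expr2 -real_normK ?num_real //.
have := normr_ge0 (v j 0); nra.
Qed.

Lemma opnorm_ub p (A : 'M[R]_p) (v : 'cV[R]_p) : l2norm v = 1 ->
  l2norm (A *m v) <= opnorm A.
Proof.
move=> v1; rewrite /opnorm.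
set S := [set _ | _ in _].
have hub : has_ubound S.
  exists (Num.sqrt (\sum_i (\sum_j `|A i j|) ^+ 2)).
  move=> r [u /= u1 <-].
  rewrite /l2norm ler_sqrt; last first.
    by apply: sumr_ge0 => i _; rewrite sqr_ge0.
  rewrite /dotv; apply: ler_sum => i _.
  have h1 : `|(A *m u) i 0| <= \sum_j `|A i j|.
    rewrite mxE; apply: le_trans (ler_norm_sum _ _ _) _.
    apply: ler_sum => j _; rewrite normrM.
    have := unit_entry_le1 j u1; have := normr_ge0 (A i j); have := normr_ge0 (u j 0); nra.
  rewrite -expr2 -real_normK ?num_real //.
  have := normr_ge0 ((A *m u) i 0); nra.
apply: ub_le_sup => //; by exists v.
Qed.

Lemma opnorm_ge0 p (A : 'M[R]_p) : 0 <= opnorm A.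
Proof.
case: (pselect (exists v : 'cV[R]_p, l2norm v = 1)) => [[v v1]|nv].
  exact: le_trans (l2norm_ge0 _) (opnorm_ub A v1).
rewrite /opnorm.
suff -> : [set l2norm (A *m v) | v in [set v : 'cV[R]_p | l2norm v = 1]] = set0.
  by rewrite sup0.
apply/seteqP; split => // r [v /= v1 _]; apply: nv; by exists v.
Qed.

Lemma bform_le_opnorm p (A : 'M[R]_p) (v : 'cV[R]_p) : l2norm v = 1 ->
  bform A v v <= opnorm A.
Proof.
move=> v1; apply: le_trans (opnorm_ub A v1).
rewrite bform_dotv; apply: le_trans (ler_norm _) _.
rewrite -(sqrtr_sqr (dotv v (A *m v))) /l2norm ler_sqrt ?dotv_ge0 //.
by have := dotv_cs v (A *m v); rewrite (l2norm1 v1) mul1r.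
Qed.

Lemma opnorm_le p (A : 'M[R]_p) (lam : R) : 0 <= lam ->
  (forall i j, A i j = A j i) -> (forall z, 0 <= bform A z z) ->
  (forall v, l2norm v = 1 -> bform A v v <= lam) -> opnorm A <= lam.
Proof.
move=> l0 sA ps hv.
have hom : forall z, bform A z z <= lam * dotv z z.
  move=> z.
  have [z0|zn] := eqVneq (dotv z z) 0.
    have zi := dotv_eq0 z0.
    rewrite z0 mulr0 /bform; rewrite big1 // => i _; rewrite big1 // => j _.
    by rewrite zi; ring.
  have np : 0 < l2norm z by rewrite sqrtr_gt0 lt0r zn dotv_ge0.
  set n := l2norm z.
  have nz : n != 0 by rewrite gt_eqF.
  have zE : z = n *: (n^-1 *: z) by rewrite scalerA mulfV // scale1r.
  have v1 : l2norm (n^-1 *: z) = 1.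
    apply/eqP; rewrite -(eqrXn2 (n := 2)) ?l2norm_ge0 // ?ler01 // expr1n.
    rewrite sqr_l2norm.
    have := dotv_expand z z (n^-1) 0; rewrite !scale0r !addr0 => ->.
    rewrite expr0n /= mul0r addr0 mulr0 mul0r addr0 -sqr_l2norm -/n.
    by rewrite -exprMn mulVf // expr1n.
  rewrite {1 2}zE bform_hom -sqr_l2norm -/n mulrC.
  by rewrite ler_pM2r ?exprn_gt0 // hv.
case: (pselect (exists v : 'cV[R]_p, l2norm v = 1)) => [[v0 v01]|nv]; last first.
  rewrite /opnorm.
  suff -> : [set l2norm (A *m v) | v in [set v : 'cV[R]_p | l2norm v = 1]] = set0.
    by rewrite sup0.
  apply/seteqP; split => // r [v /= v1 _]; apply: nv; by exists v.
apply: ge_sup; first by exists (l2norm (A *m v0)), v0.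
move=> r [v /= v1 <-].
set w := A *m v.
have ww : dotv w w = bform A w v by rewrite bform_dotv.
have cs := bform_cs w v sA ps.
have hw := hom w; have hvv := hv v v1.
have hvv0 := ps v; have hw0 := ps w.
have : dotv w w ^+ 2 <= lam ^+ 2 * dotv w w.
  rewrite ww; apply: le_trans cs _; rewrite -ww; nra.
have wge := dotv_ge0 w.
move=> h2.
have h3 : dotv w w <= lam ^+ 2.
  have [w0|wn] := eqVneq (dotv w w) 0; first by rewrite w0 sqr_ge0.
  have wp : 0 < dotv w w by rewrite lt0r wn.
  by rewrite -(ler_pM2r wp) -expr2.
by rewrite /l2norm -(ger0_norm l0) -sqrtr_sqr ler_sqrt // sqr_ge0.
Qed.

End Alg2.

Lemma derivable_cont (R : realType) (h : R -> R) : (forall t, derivable h t 1) -> continuous h.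
Proof. by move=> dh t; apply: differentiable_continuous; apply/derivable1_diffP. Qed.

Lemma measurable_derive1 (R : realType) (h : R -> R) : (forall t, derivable h t 1) ->
  measurable_fun [set: R] (derive1 h).
Proof.
move=> dh.
have mh : measurable_fun [set: R] h.
  by apply: continuous_measurable_fun; exact: derivable_cont.
apply: (@measurable_fun_cvg _ R R setT
  (fun n (x : R) => (harmonic n)^-1 * (h (harmonic n + x) - h x))).
- move=> n; apply: measurable_funM => //; apply: measurable_funB => //.
  by apply: measurableT_comp => //; apply: measurable_funD.
- move=> x _; rewrite derive1E /derive.
  have := dh x; move/cvgr_dnbhsP => /(_ harmonic) /=.
  have hn : forall n, (harmonic n : R) != 0 by move=> n; rewrite gt_eqF // harmonic_gt0.
  move=> /(_ (conj hn cvg_harmonic)).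
  move=> H; apply: cvg_trans H; apply: near_eq_cvg; near=> n.
  by rewrite /= -[_%:A]/(_ * 1) mulr1.
Unshelve. all: end_near.
Qed.

Section Prob.
Context {R : realType} {d : measure_display} {T : measurableType d} (P : probability T R).

Definition RE (f : T -> R) : R := fine 'E_P[f].

Lemma L1_le (f g : T -> R) : measurable_fun setT f -> g \in Lfun P 1 ->
  (forall w, `|f w| <= `|g w|) -> f \in Lfun P 1.
Proof.
move=> mf /Lfun1_integrable ig h; apply/Lfun1_integrable.
apply: le_integrable ig => //; first exact/measurable_EFinP.
by move=> w _ /=; rewrite lee_fin.
Qed.

Lemma L1_bound (f : T -> R) (M : R) : measurable_fun setT f -> (forall w, 0 <= f w) ->
  ('E_P[f] <= M%:E)%E -> f \in Lfun P 1.
Proof.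
move=> mf f0 hM; apply/Lfun1_integrable; apply/integrableP; split.
  exact/measurable_EFinP.
have -> : (\int[P]_x `|(EFin \o f) x| = 'E_P[f])%E.
  by rewrite unlock; apply: eq_integral => w _; rewrite /= ger0_norm.
by rewrite (le_lt_trans hM) // ltey.
Qed.

Lemma RE_bound (f : T -> R) (M : R) : measurable_fun setT f -> (forall w, 0 <= f w) ->
  ('E_P[f] <= M%:E)%E -> RE f <= M.
Proof.
move=> mf f0 hM; have l1 := L1_bound mf f0 hM.
by rewrite /RE -lee_fin fineK ?expectation_fin_num.
Qed.

Lemma RE_D (f g : T -> R) : f \in Lfun P 1 -> g \in Lfun P 1 ->
  RE (f \+ g) = RE f + RE g.
Proof. by move=> hf hg; rewrite /RE expectationD // fineD ?(expectation_fin_num hf) ?(expectation_fin_num hg). Qed.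

Lemma RE_Z (k : R) (f : T -> R) : f \in Lfun P 1 -> RE (k \o* f) = k * RE f.
Proof. by move=> hf; rewrite /RE expectationZl // fineM ?(expectation_fin_num hf). Qed.

Lemma RE_le (f g : T -> R) : f \in Lfun P 1 -> g \in Lfun P 1 ->
  (forall w, f w <= g w) -> RE f <= RE g.
Proof.
move=> hf hg h; rewrite -subr_ge0 /RE -fineB ?(expectation_fin_num hf) ?(expectation_fin_num hg) //.
rewrite -expectationB //; apply: fine_ge0; apply: expectation_ge0 => w /=.
by rewrite subr_ge0.
Qed.

Lemma L2_of (f : T -> R) : measurable_fun setT f ->
  P.-integrable setT (EFin \o (fun w => f w ^+ 2)) -> f \in Lfun P 2%:E.
Proof.
move=> mf /integrableP [_ hi].
rewrite inE; apply/andP; split; first by rewrite inE.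
rewrite inE /= /finite_norm unlock /Lnorm.
apply: poweR_lty; apply: le_lt_trans hi; rewrite le_eqVlt; apply/orP; left; apply/eqP.
apply: eq_integral => w _ /=.
rewrite powR_mulrn ?normr_ge0 // real_normK ?num_real //.
by rewrite ger0_norm // sqr_ge0.
Qed.

Lemma L2_L1 (f : T -> R) : f \in Lfun P 2%:E -> f \in Lfun P 1.
Proof. by apply: Lfun_subset12; exact: fin_num_measure. Qed.

Lemma L2_scale (a : R) (f : T -> R) : f \in Lfun P 2%:E -> (a \o* f) \in Lfun P 2%:E.
Proof. by apply: Lfun_scale; rewrite ler1n. Qed.

Lemma L2_sum (I : Type) (s : seq I) (a : I -> R) (f : I -> T -> R) :
  (forall i, f i \in Lfun P 2%:E) -> \sum_(i <- s) (a i \o* f i) \in Lfun P 2%:E.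
Proof.
move=> hf; have two : (1 <= 2%:E :> \bar R)%E by rewrite lee1n.
by apply: rpred_sum => i _; exact: L2_scale.
Qed.

Lemma cov_suml (I : Type) (s : seq I) (a : I -> R) (f : I -> T -> R) (Z : T -> R) :
  (forall i, f i \in Lfun P 2%:E) -> Z \in Lfun P 2%:E ->
  fine (covariance P (\sum_(i <- s) (a i \o* f i)) Z) =
  \sum_(i <- s) a i * fine (covariance P (f i) Z).
Proof.
move=> hf hZ; elim: s => [|i s IH].
  rewrite !big_nil.
  have -> : (0 : T -> R) = cst 0 by apply/funext.
  by rewrite covariance_cst_l.
rewrite !big_cons covarianceDl ?L2_scale ?L2_sum //.
have f1 := L2_L1 (hf i); have Z1 := L2_L1 hZ.
have fZ : (f i * Z)%R \in Lfun P 1 by exact: Lfun2_mul_Lfun1.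
rewrite fineD; last 2 first.
- by rewrite covarianceZl // fin_numM // covariance_fin_num.
- apply: covariance_fin_num => //; first exact: L2_L1 (L2_sum _ _ hf).
  exact: Lfun2_mul_Lfun1 (L2_sum _ _ hf) hZ.
by rewrite IH covarianceZl // fineM // covariance_fin_num.
Qed.

Lemma cov_quad p (g : 'I_p -> T -> R) (v : 'cV[R]_p) :
  (forall i, g i \in Lfun P 2%:E) ->
  fine ('V_P[\sum_i (v i 0 \o* g i)]) =
  bform (\matrix_(i, j) fine (covariance P (g i) (g j))) v v.
Proof.
move=> hg; rewrite /variance cov_suml ?L2_sum // /bform.
apply: eq_bigr => i _.
rewrite covarianceC cov_suml // mulr_sumr; apply: eq_bigr => j _.
by rewrite mxE covarianceC; ring.
Qed.

Lemma L1_scale (a : R) (f : T -> R) : f \in Lfun P 1 -> (a \o* f) \in Lfun P 1.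
Proof. by apply: Lfun_scale. Qed.

Lemma L1_add (f g : T -> R) : f \in Lfun P 1 -> g \in Lfun P 1 -> (f \+ g) \in Lfun P 1.
Proof. by move=> hf hg; apply: rpredD. Qed.

Lemma RE_ge0 (f : T -> R) : (forall w, 0 <= f w) -> 0 <= RE f.
Proof. by move=> h; apply: fine_ge0; apply: expectation_ge0. Qed.

Lemma RE_cs (f h : T -> R) : measurable_fun setT f -> measurable_fun setT h ->
  (fun w => f w ^+ 4) \in Lfun P 1 -> (fun w => h w ^+ 4) \in Lfun P 1 ->
  (fun w => f w ^+ 2 * h w ^+ 2) \in Lfun P 1 /\
  RE (fun w => f w ^+ 2 * h w ^+ 2) ^+ 2 <=
    RE (fun w => f w ^+ 4) * RE (fun w => h w ^+ 4).
Proof.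
move=> mf mh f4 h4.
have l1 : (fun w => f w ^+ 2 * h w ^+ 2) \in Lfun P 1.
  apply: (L1_le (g := (fun w => f w ^+ 4) \+ (fun w => h w ^+ 4))).
  - by apply: measurable_funM; apply: measurable_funX.
  - exact: L1_add.
  - move=> w /=; rewrite !ger0_norm; last 2 first.
      by rewrite addr_ge0 // -[4%N]/(2 * 2)%N exprM sqr_ge0.
      by rewrite mulr_ge0 // sqr_ge0.
    have := sqr_ge0 (f w ^+ 2 - h w ^+ 2); have := sqr_ge0 (f w); have := sqr_ge0 (h w).
    rewrite -[4%N]/(2 * 2)%N !exprM; nra.
split => //.
apply: quad_lemma.
- by apply: RE_ge0 => w; rewrite -[4%N]/(2 * 2)%N exprM sqr_ge0.
- by apply: RE_ge0 => w; rewrite -[4%N]/(2 * 2)%N exprM sqr_ge0.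
- by apply: RE_ge0 => w; rewrite mulr_ge0 // sqr_ge0.
move=> t t0.
rewrite -mulrA -RE_Z // -RE_Z ?L1_scale // -(RE_Z _ f4) -RE_D ?L1_scale //.
apply: RE_le; [by do 2 apply: L1_scale | by apply: L1_add => //; exact: L1_scale | ].
move=> w /=.
have := sqr_ge0 (t * f w ^+ 2 - h w ^+ 2).
rewrite -[4%N]/(2 * 2)%N !exprM; nra.
Qed.

Lemma fun_sqrE (X : T -> R) : (X ^+ 2)%R = (fun w => X w ^+ 2).
Proof. by apply/funext => w; rewrite !expr2. Qed.

Lemma var_fine (X : T -> R) : X \in Lfun P 2%:E ->
  fine ('V_P[X]) = RE (fun w => X w ^+ 2) - RE X ^+ 2.
Proof.
move=> X2; have X1 := L2_L1 X2.
have XX : (X ^+ 2)%R \in Lfun P 1.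
  by rewrite expr2; exact: Lfun2_mul_Lfun1.
rewrite varianceE // -(fineK (expectation_fin_num X1)) -EFin_expe.
rewrite fineB ?expectation_fin_num //= /RE fun_sqrE //.
Qed.

Lemma RE_sum (I : Type) (s : seq I) (a : I -> R) (f : I -> T -> R) :
  (forall i, f i \in Lfun P 1) ->
  RE (\sum_(i <- s) (a i \o* f i)) = \sum_(i <- s) a i * RE (f i).
Proof.
move=> hf; elim: s => [|i s IH].
  rewrite !big_nil.
  have -> : (0 : T -> R) = cst 0 by apply/funext.
  by rewrite /RE expectation_cst.
rewrite !big_cons RE_D ?L1_scale //; last by apply: rpred_sum => j _; exact: L1_scale.
by rewrite RE_Z // IH.
Qed.

Lemma E_bound_ge0 (f : T -> R) (M : R) : (forall w, 0 <= f w) ->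
  ('E_P[f] <= M%:E)%E -> 0 <= M.
Proof.
by move=> f0 hM; rewrite -lee_fin; apply: le_trans hM; apply: expectation_ge0.
Qed.

End Prob.

End Aux.
Import Aux.

Lemma W_le (R : realDomainType) (c x z : R) : 0 <= c ->
  `|c ^+ 3 * x + 3 * c ^+ 2 * z ^+ 2| <= `|x| * c ^+ 3 + `|z| ^+ 2 * (3 * c ^+ 2).
Proof.
move=> c0; apply: le_trans (ler_normD _ _) _.
have h1 : `|c ^+ 3 * x| = c ^+ 3 * `|x|.
  by rewrite (normrM (c ^+ 3) x) (ger0_norm (exprn_ge0 3 c0)).
have h2 : `|3 * c ^+ 2 * z ^+ 2| = 3 * c ^+ 2 * `|z| ^+ 2.
  rewrite (normrM (3 * c ^+ 2) (z ^+ 2)) (ger0_norm (sqr_ge0 z)) real_normK ?num_real //.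
  by rewrite ger0_norm // mulr_ge0 // exprn_ge0.
by rewrite h1 h2 le_eqVlt; apply/orP; left; apply/eqP; ring.
Qed.

Lemma sum_apply (R : realType) (T : Type) (p : nat) (a : 'I_p -> R) (f : 'I_p -> T -> R) (w : T) :
  (\sum_i (a i \o* f i)) w = \sum_i f i w * a i.
Proof. by rewrite fct_sumE. Qed.

Lemma pow4_le (R : realType) (a b : R) : (a - b) ^+ 4 <= 8 * a ^+ 4 + 8 * `|b| ^+ 4.
Proof.
have -> : `|b| ^+ 4 = b ^+ 4 by rewrite -[4%N]/(2 * 2)%N !exprM real_normK ?num_real.
have h1 : (a - b) ^+ 2 <= 2 * (a ^+ 2 + b ^+ 2) by have := sqr_ge0 (a + b); nra.
have h2 : (a ^+ 2 + b ^+ 2) ^+ 2 <= 2 * (a ^+ 4 + b ^+ 4).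
  have := sqr_ge0 (a ^+ 2 - b ^+ 2); rewrite -[4%N]/(2 * 2)%N !exprM; nra.
have h0 := sqr_ge0 (a - b).
rewrite -[4%N]/(2 * 2)%N exprM.
have : ((a - b) ^+ 2) ^+ 2 <= (2 * (a ^+ 2 + b ^+ 2)) ^+ 2.
  by rewrite ler_pXn2r // ?nnegrE // (le_trans h0 h1).
move: h2; rewrite -[4%N]/(2 * 2)%N !exprM; nra.
Qed.

Theorem mainTheorem5 (R : realType) (C4 : R) :
  exists C1 C2 : R, 0 < C1 /\ 0 < C2 /\
  forall (p : nat) (d : measure_display) (T : measurableType d)
    (P : probability T R) (xs : 'I_p -> {RV P >-> R}) (y : {RV P >-> R})
    (Phi : R -> R) (c : R) (thetas : 'cV[R]_p)
    (L2 L4 B2 B4 M22 M41 : R),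
    (* x : mean zero, finite covariance Sigma, bounded 4th moments *)
    (forall i, ('E_P[xs i] = 0)%E) ->
    (forall i, P.-integrable setT (fun w => ((xs i w) ^+ 2)%:E)) ->
    bounded_moments P 2 C4 (fun i => xs i : T -> R) ->
    (* Phi four times differentiable *)
    (forall n, (n < 4)%N -> forall t, derivable ((derive1n n Phi)) t 1) ->
    0 < c ->
    let eta := fun w => dotv (xvec (fun i => xs i : T -> R) w) thetas in
    (* E[y | x] = Phi'(eta_star) *)
    cond_exp_is P (fun i => xs i : T -> R) y (fun w => (derive1n 1 Phi) (eta w)) ->
    (* E[(y - Phi'(eta_star))^4 | x] = c^3 Phi''''(eta_star) + 3 c^2 Phi''(eta_star)^2 *)
    cond_exp_is P (fun i => xs i : T -> R)
      (fun w => (y w - (derive1n 1 Phi) (eta w)) ^+ 4)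
      (fun w => c ^+ 3 * (derive1n 4 Phi) (eta w) + 3 * c ^+ 2 * ((derive1n 2 Phi) (eta w)) ^+ 2) ->
    0 <= L2 -> 0 <= L4 -> 0 <= B2 -> 0 <= B4 ->
    (forall theta : 'cV[R]_p,
      'E_P[(fun w => `|(derive1n 1 Phi) (dotv (xvec (fun i => xs i : T -> R) w) theta)
                     - (derive1n 1 Phi) (eta w)| ^+ 2)%R]
        <= (L2 * l2norm (theta - thetas) ^+ 2 + B2)%:E)%E ->
    (forall theta : 'cV[R]_p,
      'E_P[(fun w => `|(derive1n 1 Phi) (dotv (xvec (fun i => xs i : T -> R) w) theta)
                     - (derive1n 1 Phi) (eta w)| ^+ 4)%R]
        <= (L4 * l2norm (theta - thetas) ^+ 4 + B4)%:E)%E ->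
    ('E_P[(fun w => `|(derive1n 2 Phi) (eta w)| ^+ 2)%R] <= M22%:E)%E ->
    ('E_P[(fun w => `|(derive1n 4 Phi) (eta w)|)%R] <= M41%:E)%E ->
    forall theta : 'cV[R]_p,
      let Sigma := covmx P (fun i => xs i : T -> R) in
      (* gradient of -y<x,theta> + Phi(<x,theta>) *)
      let grad := fun (i : 'I_p) (w : T) =>
        (- y w + (derive1n 1 Phi) (dotv (xvec (fun i => xs i : T -> R) w) theta)) * xs i w in
      opnorm (covmx P grad) <=
        C1 * l2norm (theta - thetas) ^+ 2 * opnorm Sigma * (Num.sqrt L4 + L2)
        + C2 * opnorm Sigma *
          (B2 + Num.sqrt B4 + c * Num.sqrt (3 * M22) + Num.sqrt (c ^+ 3 * M41)).

Proof.
pose C := Num.max C4 0.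
have C0 : 0 <= C by rewrite /C le_max lexx orbT.
have C4C : C4 <= C by rewrite /C le_max lexx.
pose K := 8 * C + 8.
have K0 : 0 < K by rewrite /K; lra.
exists K, K; split; first exact: K0.
split; first exact: K0.
move=> p d T P xs y Phi c thetas L2 L4 B2 B4 M22 M41 Ex0 Ex2 bm hPhi c0 eta hc1 hc4.
move=> L20 L40 B20 B40 hL2 hL4 hM22 hM41 theta.
cbv zeta.
set Sigma := covmx P (fun i => xs i : T -> R).
pose xf := (fun i => xs i : T -> R).
pose X (u : 'cV[R]_p) (w : T) := dotv (xvec xf w) u.
have mxs : forall i, measurable_fun setT (xf i) by move=> i; exact: measurable_funPT.
have XE : forall u, X u = \sum_i (u i 0 \o* xf i).
  move=> u; apply/funext => w; rewrite /X /dotv fct_sumE /=; apply: eq_bigr => i _ .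
  by rewrite /xvec mxE /= mulrC.
have mX : forall u, measurable_fun setT (X u).
  move=> u; rewrite XE.
  have : \sum_i (u i 0 \o* xf i) \in mfun.
    by apply: rpred_sum => i _; rewrite inE; apply: measurable_funM.
  by rewrite inE.
have ev4 : forall z : R, 0 <= z ^+ 4.
  by move=> z; rewrite -[4%N]/(2 * 2)%N exprM sqr_ge0.
have mPhi : forall k, (k < 4)%N -> measurable_fun setT (derive1n k Phi).
  move=> k hk; apply: continuous_measurable_fun; apply: derivable_cont => t.
  exact: hPhi.
have mPhi4 : measurable_fun setT (derive1n 4 Phi).
  rewrite derive1nS; apply: measurable_derive1 => t; exact: hPhi.
have mean0 : meanvec P xf = 0.
  by apply/matrixP => i j; rewrite !mxE Ex0.
have bm4 : forall v, l2norm v = 1 ->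
   ('E_P[(fun w => X v w ^+ 4)%R] <= (C4 * (RE P (fun w => X v w ^+ 2)) ^+ 2)%:E)%E.
  move=> v v1; have := bm v v1.
  have e1 : (fun w => dotv (xvec xf w - meanvec P xf) v ^+ (2 * 2)) = (fun w => X v w ^+ 4).
    by apply/funext => w; rewrite mean0 subr0.
  have e2 : (fun w => dotv (xvec xf w - meanvec P xf) v ^+ 2) = (fun w => X v w ^+ 2).
    by apply/funext => w; rewrite mean0 subr0.
  by rewrite e1 e2.
have x2 : forall i, xf i \in Lfun P 2%:E by move=> i; exact: L2_of (mxs i) (Ex2 i).
have X2 : forall v, X v \in Lfun P 2%:E by move=> v; rewrite XE; apply: L2_sum.
have RX0 : forall v, RE P (X v) = 0.
  move=> v; rewrite XE RE_sum; last by move=> i; exact: L2_L1.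
  by rewrite big1 // => i _; rewrite /RE Ex0 mulr0.
have Xvar : forall v, RE P (fun w => X v w ^+ 2) = bform Sigma v v.
  move=> v; have := var_fine (X2 v); rewrite RX0 expr0n subr0 => <-.
  by rewrite XE cov_quad.
have X4 : forall v, l2norm v = 1 -> (fun w => X v w ^+ 4) \in Lfun P 1.
  by move=> v v1; apply: L1_bound (bm4 v v1) => //; apply: measurable_funX.
have X4R : forall v, l2norm v = 1 ->
    RE P (fun w => X v w ^+ 4) <= C4 * (bform Sigma v v) ^+ 2.
  move=> v v1; rewrite -Xvar; apply: RE_bound (bm4 v v1) => //.
  exact: measurable_funX.
pose e (i : 'I_p) : 'cV[R]_p := \col_j (j == i)%:R.
have eu : forall i, l2norm (e i) = 1.
  move=> i; rewrite /l2norm /dotv (bigD1 i) //= big1 ?addr0.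
    by rewrite !mxE eqxx mulr1 sqrtr1.
  by move=> j ji; rewrite !mxE (negbTE ji) mulr0.
have Xe : forall i, X (e i) = xf i.
  move=> i; apply/funext => w; rewrite /X /dotv (bigD1 i) //= big1 ?addr0.
    by rewrite !mxE eqxx mulr1.
  by move=> j ji; rewrite !mxE (negbTE ji) mulr0.
pose Phi1 := derive1n 1 Phi.
have mPhi1 : measurable_fun setT Phi1 := mPhi 1%N isT.
pose Dt w := y w - Phi1 (X theta w).
pose a w := y w - Phi1 (eta w).
have meta : measurable_fun setT eta := mX thetas.
have my : measurable_fun setT y := measurable_funPT y.
have mDt : measurable_fun setT Dt.
  by apply: measurable_funB => //; apply: measurableT_comp => //; exact: mX.
have ma : measurable_fun setT a.
  by apply: measurable_funB => //; apply: measurableT_comp.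
case: hc4 => ia4 hA.
have a4 : (fun w => a w ^+ 4) \in Lfun P 1 by apply/Lfun1_integrable.
pose bb := fun w => `|Phi1 (X theta w) - Phi1 (eta w)| ^+ 4.
have mbb : measurable_fun setT bb.
  apply: measurable_funX; apply: measurableT_comp; first exact: normr_measurable.
  by apply: measurable_funB; apply: measurableT_comp => //; exact: mX.
have bb1 : bb \in Lfun P 1 by apply: L1_bound mbb _ (hL4 theta) => w; exact: ev4.
have bbR : RE P bb <= L4 * l2norm (theta - thetas) ^+ 4 + B4.
  by apply: RE_bound mbb _ (hL4 theta) => w; exact: ev4.
pose g8 := (8 \o* (fun w => a w ^+ 4)) \+ (8 \o* bb).
have g81 : g8 \in Lfun P 1 by apply: L1_add; apply: L1_scale.
have Dg8 : forall w, Dt w ^+ 4 <= g8 w.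
  move=> w; rewrite /g8 /= /Dt /bb.
  have -> : y w - Phi1 (X theta w) = a w - (Phi1 (X theta w) - Phi1 (eta w)) by rewrite /a; ring.
  by rewrite (mulrC (a w ^+ 4)) (mulrC (`|_| ^+ 4)); exact: pow4_le.
have D4 : (fun w => Dt w ^+ 4) \in Lfun P 1.
  apply: (L1_le (g := g8)) => //; first exact: measurable_funX.
  move=> w; have h1 := ev4 (Dt w); have h2 := Dg8 w; rewrite !ger0_norm //; exact: le_trans h1 h2.
have D4R : RE P (fun w => Dt w ^+ 4) <= 8 * RE P (fun w => a w ^+ 4) + 8 * RE P bb.
  apply: le_trans (RE_le D4 g81 Dg8) _.
  by rewrite RE_D ?L1_scale // !RE_Z.
have sT : sigma_of xf setT.
  move=> A [[A0 AC _] _]; have := AC set0 A0; by rewrite setD0.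
have hW := hA setT sT.
pose W := fun w => c ^+ 3 * derive1n 4 Phi (eta w) + 3 * c ^+ 2 * derive1n 2 Phi (eta w) ^+ 2.
have REaW : RE P (fun w => a w ^+ 4) = RE P W.
  rewrite /RE expectation.unlock.
  exact: (congr1 fine hW).
have mf4 : measurable_fun setT (fun w => derive1n 4 Phi (eta w)).
  exact: (measurableT_comp mPhi4 meta).
have mf2 : measurable_fun setT (fun w => derive1n 2 Phi (eta w)).
  exact: (measurableT_comp (mPhi 2%N isT) meta).
pose f4 := fun w => `|derive1n 4 Phi (eta w)|.
pose f2 := fun w => `|derive1n 2 Phi (eta w)| ^+ 2.
have mf4a : measurable_fun setT f4.
  exact: (measurableT_comp (@normr_measurable R setT) mf4).
have mf2a : measurable_fun setT f2.
  exact: (measurable_funX 2 (measurableT_comp (@normr_measurable R setT) mf2)).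
have f41 : f4 \in Lfun P 1 by apply: L1_bound mf4a _ hM41 => w; exact: normr_ge0.
have f21 : f2 \in Lfun P 1 by apply: L1_bound mf2a _ hM22 => w; exact: sqr_ge0.
have f4R : RE P f4 <= M41 by apply: RE_bound mf4a _ hM41 => w; exact: normr_ge0.
have f2R : RE P f2 <= M22 by apply: RE_bound mf2a _ hM22 => w; exact: sqr_ge0.
have M410 : 0 <= M41 by apply: E_bound_ge0 hM41 => w; exact: normr_ge0.
have M220 : 0 <= M22 by apply: E_bound_ge0 hM22 => w; exact: sqr_ge0.
pose gW := (c ^+ 3 \o* f4) \+ ((3 * c ^+ 2) \o* f2).
have gW1 : gW \in Lfun P 1 by apply: L1_add; apply: L1_scale.
have c0' : 0 <= c := ltW c0.
have Wg : forall w, `|W w| <= gW w.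
  move=> w; have := @W_le R c (derive1n 4 Phi (eta w)) (derive1n 2 Phi (eta w)) c0'.
  exact.
have W1 : W \in Lfun P 1.
  apply: (L1_le (g := gW)) => //.
    exact: (measurable_funD (measurable_funM (measurable_cst _) mf4)
      (measurable_funM (measurable_cst _) (measurable_funX 2 mf2))).
  move=> w; rewrite [`|gW w|]ger0_norm; first exact: Wg.
  exact: le_trans (normr_ge0 _) (Wg w).
have WR : RE P W <= c ^+ 3 * M41 + 3 * c ^+ 2 * M22.
  apply: le_trans (RE_le W1 gW1 (fun w => le_trans (ler_norm _) (Wg w))) _.
  rewrite RE_D ?L1_scale // !RE_Z //.
  by apply: lerD; apply: ler_wpM2l => //; rewrite ?mulr_ge0 ?exprn_ge0.
pose n := l2norm (theta - thetas).
pose sL := Num.sqrt L4.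
pose sB := Num.sqrt B4.
pose sM := Num.sqrt (3 * M22).
pose sW := Num.sqrt (c ^+ 3 * M41).
pose S := sL * n ^+ 2 + sB + c * sM + sW.
have n0 : 0 <= n := l2norm_ge0 _.
have sL0 : 0 <= sL := sqrtr_ge0 _.
have sB0 : 0 <= sB := sqrtr_ge0 _.
have sM0 : 0 <= sM := sqrtr_ge0 _.
have sW0 : 0 <= sW := sqrtr_ge0 _.
have S0 : 0 <= S.
  by rewrite /S !addr_ge0 ?mulr_ge0 ?exprn_ge0.
have hsL : (sL * n ^+ 2) ^+ 2 = L4 * n ^+ 4.
  by rewrite exprMn sqr_sqrtr // -exprM.
have hsB : sB ^+ 2 = B4 by rewrite sqr_sqrtr.
have hsM : (c * sM) ^+ 2 = 3 * c ^+ 2 * M22.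
  by rewrite exprMn sqr_sqrtr ?mulr_ge0 //; ring.
have hsW : sW ^+ 2 = c ^+ 3 * M41 by rewrite sqr_sqrtr // mulr_ge0 // exprn_ge0.
have D4S : RE P (fun w => Dt w ^+ 4) <= 8 * S ^+ 2.
  apply: le_trans D4R _; rewrite REaW.
  have h1 : L4 * n ^+ 4 + B4 + 3 * c ^+ 2 * M22 + c ^+ 3 * M41 <= S ^+ 2.
    rewrite -hsL -hsB -hsM -hsW /S.
    have := mulr_ge0 sL0 (exprn_ge0 2 n0); have := mulr_ge0 c0' sM0.
    set A1 := sL * n ^+ 2; set A3 := c * sM; nra.
  move: bbR; rewrite -/n => bbR; lra.
have x4 : forall i, (fun w => xf i w ^+ 4) \in Lfun P 1.
  by move=> i; rewrite -Xe; exact: X4 (eu i).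
pose grad := fun (i : 'I_p) (w : T) => (- y w + Phi1 (X theta w)) * xs i w.
have g2 : forall i, grad i \in Lfun P 2%:E.
  move=> i; apply: L2_of.
    exact: (measurable_funM (measurable_funD (measurable_funN my)
      (measurableT_comp mPhi1 (mX theta))) (mxs i)).
  have [l1 _] := RE_cs mDt (mxs i) D4 (x4 i).
  move/Lfun1_integrable : l1.
  have -> : (fun w => grad i w ^+ 2) = (fun w => Dt w ^+ 2 * xf i w ^+ 2).
    by apply/funext => w; rewrite /grad /Dt /xf /=; ring.
  exact.
have K0' : 0 <= K := ltW K0.
have o0 : 0 <= opnorm Sigma := opnorm_ge0 _.
have Qv : forall v, l2norm v = 1 -> bform (covmx P grad) v v <= K * S * opnorm Sigma.
  move=> v v1.
  pose G := \sum_i (v i 0 \o* grad i).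
  have G2 : G \in Lfun P 2%:E by apply: L2_sum.
  have E := cov_quad v g2.
  rewrite (_ : bform (covmx P grad) v v = fine 'V_P[G]); last by rewrite E.
  rewrite var_fine //.
  have GE : (fun w => G w ^+ 2) = (fun w => Dt w ^+ 2 * X v w ^+ 2).
    apply/funext => w; rewrite /G sum_apply.
    have -> : \sum_i grad i w * v i 0 = - Dt w * X v w.
      rewrite /X /dotv mulr_sumr; apply: eq_bigr => i _.
      by rewrite /grad /Dt /xvec /xf mxE; ring.
    ring.
  rewrite GE.
  have [l1 cs] := RE_cs mDt (mX v) D4 (X4 v v1).
  set ee := RE P (fun w => Dt w ^+ 2 * X v w ^+ 2).
  have e0 : 0 <= ee by apply: RE_ge0 => w; rewrite mulr_ge0 // sqr_ge0.
  set s := bform Sigma v v.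
  have s0 : 0 <= s by rewrite /s -Xvar; apply: RE_ge0 => w; exact: sqr_ge0.
  have so : s <= opnorm Sigma := bform_le_opnorm Sigma v1.
  have X4R' := X4R v v1.
  have X40 : 0 <= RE P (fun w => X v w ^+ 4) by apply: RE_ge0 => w; exact: ev4.
  have D40 : 0 <= RE P (fun w => Dt w ^+ 4) by apply: RE_ge0 => w; exact: ev4.
  have hC : C4 * s ^+ 2 <= C * s ^+ 2 by apply: ler_wpM2r => //; exact: sqr_ge0.
  have e2 : ee ^+ 2 <= (8 * S ^+ 2) * (C * s ^+ 2).
    apply: le_trans cs _; apply: ler_pM => //; exact: le_trans X4R' hC.
  have hK : 8 * C <= K ^+ 2 by rewrite /K; nra.
  have e3 : ee ^+ 2 <= (K * S * s) ^+ 2.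
    apply: le_trans e2 _; rewrite !exprMn.
    have := mulr_ge0 (exprn_ge0 2 S0) (exprn_ge0 2 s0); nra.
  have KSs : 0 <= K * S * s by rewrite !mulr_ge0.
  have e4 : ee <= K * S * s.
    by rewrite -(ler_pXn2r (n := 2)) // nnegrE.
  have hRG := sqr_ge0 (RE P G).
  apply: le_trans (_ : ee <= _); first by lra.
  apply: le_trans e4 _; apply: ler_wpM2l => //; exact: mulr_ge0.
have sym : forall i j, covmx P grad i j = covmx P grad j i.
  by move=> i j; rewrite !mxE covarianceC.
have psd : forall z, 0 <= bform (covmx P grad) z z.
  move=> z; have E := cov_quad z g2.
  rewrite (_ : bform (covmx P grad) z z = fine 'V_P[\sum_i (z i 0 \o* grad i)]); last by rewrite E.
  by apply: fine_ge0; apply: variance_ge0.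
change (opnorm (covmx P grad) <= K * n ^+ 2 * opnorm Sigma * (sL + L2) +
  K * opnorm Sigma * (B2 + sB + c * sM + sW)).
have hop := opnorm_le (mulr_ge0 (mulr_ge0 K0' S0) o0) sym psd Qv.
apply: le_trans hop _.
have := mulr_ge0 (mulr_ge0 K0' o0) (addr_ge0 (mulr_ge0 (exprn_ge0 2 n0) L20) B20).
rewrite /S; nra.
Qed.
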